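(* Let $k \ge 1$ be an integer. Let $P_1$ and $P_2$ be disjoint piles of coins, each of size $2^k$, and suppose exactly one coin of $P_1$ and exactly one coin of $P_2$ are counterfeit (all other coins genuine). Then there is an adaptive strategy using at most $k+1$ weighings on a 5-way scale (using only coins of $P_1 \cup P_2$) that determines both counterfeit coins.
   Context: Coins look identical; all genuine coins have one common weight, all counterfeit coins have one common weight strictly less than the genuine weight. A weighing places two disjoint sets of coins of equal cardinality on the left and right pans. Let $d$ = (number of counterfeit coins on the left pan) $-$ (number of counterfeit coins on the right pan). A 5-way scale reports MUCH LESS if $d \ge 2$, LESS if $d = 1$, EQUAL if $d = 0$, MORE if $d = -1$, MUCH MORE if $d \le -2$. A strategy chooses each weighing possibly depending on previous outcomes; it determines the counterfeit coins if the sequence of outcomes uniquely identifies them. *)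

(* Defs.v *)
From HB Require Import structures.
From mathcomp Require Import all_boot all_order all_algebra.
Set Implicit Arguments. Unset Strict Implicit. Unset Printing Implicit Defensive.
Import Order.TTheory GRing.Theory Num.Theory.

Inductive outcome := MuchLess | Less | Equal | More | MuchMore.

Section Coins.
Variable T : finType.

Definition diff_cf (L R C : {set T}) : int :=
  (#|L :&: C|%:Z - #|R :&: C|%:Z)%R.

Definition scale (L R C : {set T}) : outcome :=
  let d := diff_cf L R C in
  if (2 <= d)%R then MuchLess
  else if d == 1%R then Less
  else if d == 0%R then Equal
  else if d == (-1)%R then More
  else MuchMore.

Definition valid_weighing (L R : {set T}) : bool :=
  [disjoint L & R] && (#|L| == #|R|).

Inductive strategy :=
  | Stop
  | Weigh (L R : {set T}) (next : outcome -> strategy).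

Fixpoint valid_strategy (s : strategy) : Prop :=
  match s with
  | Stop => True
  | Weigh L R nx => valid_weighing L R /\
      forall o, valid_strategy (nx o)
  end.

Fixpoint depth (s : strategy) : nat :=
  match s with
  | Stop => 0
  | Weigh _ _ nx => (maxn (depth (nx MuchLess)) (maxn (depth (nx Less))
        (maxn (depth (nx Equal)) (maxn (depth (nx More)) (depth (nx MuchMore)))))).+1
  end.

Fixpoint run (s : strategy) (C : {set T}) : seq outcome :=
  match s with
  | Stop => [::]
  | Weigh L R nx => let o := scale L R C in o :: run (nx o) C
  end.

Definition determines (adm : {set T} -> Prop) (s : strategy) : Prop :=
  forall C1 C2, adm C1 -> adm C2 -> run s C1 = run s C2 -> C1 = C2.

End Coins.

(* Coins of P1 are inl i, coins of P2 are inr j, with i, j : 'I_(2^k). *)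
Definition coins (k : nat) : finType := ('I_(2 ^ k) + 'I_(2 ^ k))%type.

Definition one_in_each (k : nat) (C : {set coins k}) : Prop :=
  exists (i j : 'I_(2 ^ k)), C = [set inl i; inr j].

(* Main.v *)
Require Import Defs.
From HB Require Import structures.
From mathcomp Require Import all_boot all_order all_algebra.
Set Implicit Arguments. Unset Strict Implicit. Unset Printing Implicit Defensive.
Import Order.TTheory GRing.Theory Num.Theory.

Definition FF k := {ffun 'I_k.+1 -> bool}.
Lemma cardF k : #|FF k| = 2 ^ k.+1.
Proof. by rewrite card_ffun card_bool card_ord. Qed.
Definition gg k (x : 'I_(2 ^ k.+1)) : FF k := enum_val (cast_ord (esym (cardF k)) x).
Definition hh k (f : FF k) : 'I_(2 ^ k.+1) := cast_ord (cardF k) (enum_rank f).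
Lemma ggK k : cancel (@gg k) (@hh k).
Proof. by move=> x; rewrite /gg /hh enum_valK cast_ordKV. Qed.
Lemma hhK k : cancel (@hh k) (@gg k).
Proof. by move=> f; rewrite /gg /hh cast_ordK enum_rankK. Qed.

Definition bit k (x : 'I_(2 ^ k.+1)) (n : nat) : bool := gg x (inord n).
Definition sgnb (b : bool) : int := if b then 1%R else (-1)%R.
Definition sL k (t : nat) (x : 'I_(2 ^ k.+1)) : int :=
  if t == 0 then sgnb (bit x 0)
  else if t <= k then (if bit x t then sgnb (bit x 0) else 0%R) else 0%R.
Definition sR k (t : nat) (y : 'I_(2 ^ k.+1)) : int :=
  if t == 0 then 0%R else sgnb (bit y t.-1).
Definition side k t (c : coins k.+1) : int :=
  match c with inl x => sL t x | inr y => sR t y end.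
Definition Lset k t : {set coins k.+1} := [set c | side t c == 1%R].
Definition Rset k t : {set coins k.+1} := [set c | side t c == (-1)%R].

Definition flipo k (n : nat) (x : 'I_(2 ^ k.+1)) : 'I_(2 ^ k.+1) :=
  hh [ffun u => if u == inord n then ~~ gg x u else gg x u].

Lemma flipoK k n : involutive (@flipo k n).
Proof.
move=> x; rewrite /flipo hhK -[RHS](@ggK k); congr hh.
apply/ffunP=> u; rewrite !ffunE; by case: ifP => // ->; rewrite ?negbK.
Qed.

Lemma bit_flipo k n m x : n <= k -> m <= k ->
  bit (@flipo k n x) m = if m == n then ~~ bit x m else bit x m.
Proof.
move=> hn hm; rewrite /bit /flipo hhK ffunE.
have -> : (inord m == inord n :> 'I_k.+1) = (m == n).
  apply/eqP/eqP => [h|->//]; move: (congr1 val h); by rewrite /= !inordK.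
by [].
Qed.

Definition fl k t (c : coins k.+1) : coins k.+1 :=
  match c with inl x => inl (flipo 0 x) | inr y => inr (flipo t.-1 y) end.

Lemma flK k t : involutive (@fl k t).
Proof. by case=> x /=; rewrite flipoK. Qed.

Lemma sgnbN b : sgnb (~~ b) = (- sgnb b)%R.
Proof. by case: b. Qed.

Lemma side_fl k t c : t <= k.+1 -> side t (@fl k t c) = (- side t c)%R.
Proof.
move=> ht; case: c => x /=; rewrite /sL /sR.
- case: ifP => [_|t0]; first by rewrite bit_flipo // eqxx sgnbN.
  case: ifP => tk; last by rewrite oppr0.
  rewrite !bit_flipo // t0 eqxx sgnbN.
  by case: (bit x t) => //; rewrite oppr0.
- case: ifP => [_|t0]; first by rewrite oppr0.
  by rewrite bit_flipo ?eqxx ?sgnbN //; case: t ht t0 => // t.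
Qed.

Lemma valid_w k t : t <= k.+1 -> valid_weighing (Lset k t) (Rset k t).
Proof.
move=> ht; apply/andP; split.
  by rewrite disjoint_subset; apply/subsetP => c; rewrite !inE => /eqP->.
have -> : Rset k t = [set fl t c | c in Lset k t].
  apply/setP => c; rewrite -{2}(flK t c) mem_imset; last exact: inv_inj (flK t).
  by rewrite !inE side_fl // -eqr_oppLR.
by rewrite card_imset //; exact: inv_inj (flK t).
Qed.

Fixpoint build k (n t : nat) : strategy (coins k.+1) :=
  match n with
  | 0 => Stop _
  | n'.+1 => Weigh (Lset k t) (Rset k t) (fun _ => build k n' t.+1)
  end.

Lemma valid_build k n t : t + n <= k.+2 -> valid_strategy (build k n t).
Proof.
elim: n t => [//|n IH] t h /=; split.
  by apply: valid_w; rewrite -ltnS; apply: leq_trans h; rewrite addnS ltnS leq_addr.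
by move=> _; apply: IH; rewrite addSnnS.
Qed.

Lemma depth_build k n t : depth (build k n t) = n.
Proof. by elim: n t => [//|n IH] t /=; rewrite IH !maxnn. Qed.

Lemma run_build k n t C :
  run (build k n t) C = [seq scale (Lset k t') (Rset k t') C | t' <- iota t n].
Proof. by elim: n t => [//|n IH] t /=; rewrite IH. Qed.

Lemma card_pair (T : finType) (A : {set T}) a b : a != b ->
  #|A :&: [set a; b]| = (a \in A) + (b \in A).
Proof.
move=> ab.
have E : forall S : {set T}, (forall x, (x \in S) = (x \in A) && ((x == a) || (x == b))) ->
   A :&: [set a; b] = S.
  by move=> S hS; apply/setP=> x; rewrite hS !inE.
case: (boolP (a \in A)) => ha; case: (boolP (b \in A)) => hb;
 [rewrite (E [set a; b]) ?cards2 ?ab // | rewrite (E [set a]) ?cards1 //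
 | rewrite (E [set b]) ?cards1 // | rewrite (E set0) ?cards0 //];
 move=> x; rewrite !inE; case: (eqVneq x a) => [->|xa]; last case: (eqVneq x b) => [->|xb];
 try rewrite (negbTE xa); rewrite ?eqxx ?(negbTE ab) ?ha ?hb ?(negbTE ha) ?(negbTE hb) /= ?andbT ?andbF ?orbT ?orbF //.
all: case: (eqVneq x b) => [->|xb]; rewrite ?hb ?(negbTE hb) /= ?andbT ?andbF //.
Qed.

Lemma side_range k t (c : coins k.+1) : side t c \in ([:: 1%R; 0%R; (-1)%R] : seq int).
Proof.
case: c => x /=; rewrite /sL /sR /sgnb; repeat case: ifP => //.
Qed.

Lemma diff_pair k t i j :
  diff_cf (Lset k t) (Rset k t) [set inl i; inr j] = (sL t i + sR t j)%R.
Proof.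
rewrite /diff_cf !card_pair // !inE.
have := side_range t (inl i); have := side_range t (inr j); rewrite /= !inE.
by case/or3P => /eqP->; case/or3P => /eqP->.
Qed.

Definition sc (d : int) : outcome :=
  if (2 <= d)%R then MuchLess
  else if d == 1%R then Less
  else if d == 0%R then Equal
  else if d == (-1)%R then More
  else MuchMore.

Lemma key c a1 a2 b1 b2 :
  sc ((if a1 then sgnb c else 0) + sgnb b1)%R =
  sc ((if a2 then sgnb c else 0) + sgnb b2)%R -> a1 = a2 /\ b1 = b2.
Proof. by case: c; case: a1; case: a2; case: b1; case: b2. Qed.

Lemma key0 a b : sc (sgnb a + 0)%R = sc (sgnb b + 0)%R -> a = b.
Proof. by case: a; case: b. Qed.

Theorem mainTheorem5 (k : nat) (hk : 1 <= k) :
  exists s : strategy (coins k),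
    [/\ valid_strategy s, depth s <= k.+1 & determines (@one_in_each k) s].
Proof.
case: k hk => [//|k] _.
exists (build k k.+2 0); split.
- exact: valid_build.
- by rewrite depth_build.
move=> C1 C2 [i1 [j1 ->]] [i2 [j2 ->]]; rewrite !run_build => hr.
have E : forall u, u <= k.+1 ->
    sc (sL u i1 + sR u j1)%R = sc (sL u i2 + sR u j2)%R.
  move=> u hu; have := congr1 (nth Equal ^~ u) hr.
  rewrite !(nth_map 0) ?size_iota ?ltnS // nth_iota ?ltnS //= add0n.
  by rewrite /scale !diff_pair.
have b0 : bit i1 0 = bit i2 0.
  by apply: key0; have := E 0 isT; rewrite /sL /sR /=.
have hb : forall t, t <= k ->
    (t.+1 <= k -> bit i1 t.+1 = bit i2 t.+1) /\ bit j1 t = bit j2 t.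
  move=> t ht; have := E t.+1 ht; rewrite /sL /sR /= -b0.
  case: ifP => tk.
    by case/key.
  by move=> h; have [] := @key true false false _ _ h.
have ei : i1 = i2.
  apply: (can_inj (@ggK k)); apply/ffunP => u.
  have -> : u = inord u by rewrite inord_val.
  case: u => [[|u]] hu /=; first exact: b0.
  by have [h _] := hb u (ltnW hu); apply: h.
have ej : j1 = j2.
  apply: (can_inj (@ggK k)); apply/ffunP => u.
  have -> : u = inord u by rewrite inord_val.
  by case: u => u hu; have [_ h] := hb u hu; apply: h.
by rewrite ei ej.
Qed.
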